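(* Let $k\ge 3$, let $\mathbf{v}^i,\mathbf{w}^i\in\mathbb{C}^{n_i}$ ($i=1,\dots,k$) with $\mathbf{v}^i,\mathbf{w}^i$ linearly independent for every $i$, $V_i=\langle\mathbf{v}^i,\mathbf{w}^i\rangle$, and $T=\sum_{i=1}^k \mathbf{v}^1\otimes\cdots\otimes\mathbf{w}^i\otimes\cdots\otimes\mathbf{v}^k$ (with $\mathbf{w}^i$ in the $i$-th slot). Let $P=\mathbf{p}^1\otimes\cdots\otimes\mathbf{p}^k$ with $\mathbf{p}^i\in V_i$ nonzero and $\mathbf{p}^i$ not a scalar multiple of $\mathbf{v}^i$ for every $i=1,\dots,k$. Then there is $\lambda\in\mathbb{C}$ with $\mathrm{rk}(T-\lambda P)=\mathrm{rk}(T)-1$, i.e. $P$ belongs to the decomposition locus of $T$.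
   Context: The rank of a tensor is the minimal number of rank-one tensors $\mathbf{u}^1\otimes\cdots\otimes\mathbf{u}^k$ summing to it. A rank-one tensor $P$ is in the decomposition locus of $T$ if $\mathrm{rk}(T-\lambda P)=\mathrm{rk}(T)-1$ for some $\lambda\in\mathbb{C}$. *)

(* Defs.v *)
From HB Require Import structures.
From mathcomp Require Import all_boot all_algebra.
From mathcomp Require Import complex.
From mathcomp Require Import reals Rstruct.
Set Implicit Arguments. Unset Strict Implicit. Unset Printing Implicit Defensive.
Import GRing.Theory Num.Theory.
Local Open Scope ring_scope.

Definition C : numClosedFieldType := (Rdefinitions.R)[i].

Definition multi_index (k : nat) (n : 'I_k -> nat) := forall i : 'I_k, 'I_(n i).
Definition tensor (k : nat) (n : 'I_k -> nat) := multi_index n -> C.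

Definition outer (k : nat) (n : 'I_k -> nat) (u : forall i : 'I_k, 'rV[C]_(n i))
  : tensor n := fun x => \prod_(i < k) u i 0 (x i).

Definition tensor_sub (k : nat) (n : 'I_k -> nat) (T P : tensor n) : tensor n :=
  fun x => T x - P x.
Definition tensor_scale (k : nat) (n : 'I_k -> nat) (c : C) (P : tensor n) : tensor n :=
  fun x => c * P x.

Definition sum_of_rank_one (k : nat) (n : 'I_k -> nat) (T : tensor n) (r : nat) :=
  exists u : 'I_r -> forall i : 'I_k, 'rV[C]_(n i),
    T = (fun x => \sum_(j < r) outer (u j) x).

Definition tensor_rank_is (k : nat) (n : 'I_k -> nat) (T : tensor n) (r : nat) :=
  sum_of_rank_one T r /\ forall r', sum_of_rank_one T r' -> (r <= r')%N.

Definition in_decomposition_locus (k : nat) (n : 'I_k -> nat) (T P : tensor n) :=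
  exists (lambda : C) (r : nat),
    tensor_rank_is T r /\ tensor_rank_is (tensor_sub T (tensor_scale lambda P)) (r - 1).

Definition W_tensor (k : nat) (n : 'I_k -> nat) (v w : forall i : 'I_k, 'rV[C]_(n i))
  : tensor n :=
  fun x => \sum_(i < k) outer (fun j => if j == i then w j else v j) x.

(* Main.v *)
Require Import Defs.
From mathcomp Require Import all_boot all_order all_algebra ring.
From mathcomp Require Import complex reals Rstruct.
From Stdlib Require Import FunctionalExtensionality.
Import Order.TTheory GRing.Theory Num.Theory.
Local Open Scope ring_scope.
Unset Printing Implicit Defensive.

Definition upd {k : nat} {n : 'I_k -> nat} (x : multi_index n) (i0 : 'I_k)
  (y : 'I_(n i0)) : multi_index n :=
  fun j => match i0 =P j with
           | ReflectT h => ecast j 'I_(n j) h y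
           | ReflectF _ => x j end.

Lemma upd_same {k n} (x : multi_index n) (i0 : 'I_k) y : upd x i0 y i0 = y.
Proof. rewrite /upd; case: eqP => // h; by rewrite eq_axiomK. Qed.

Lemma upd_other {k n} (x : multi_index n) (i0 : 'I_k) y j : j != i0 -> upd x i0 y j = x j.
Proof. move=> hj; rewrite /upd; case: eqP => // h; by rewrite h eqxx in hj. Qed.

Definition ap {m} (f : 'I_m -> C) (a : 'rV[C]_m) := \sum_(y < m) f y * a 0 y.

Lemma apZ {m} (f : 'I_m -> C) c a : ap f (c *: a) = c * ap f a.
Proof. rewrite /ap mulr_sumr; apply: eq_bigr => y _; rewrite mxE; ring. Qed.

Lemma contr_outer {k n} (u : forall i : 'I_k, 'rV[C]_(n i)) i0 (f : 'I_(n i0) -> C) x :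
  \sum_(y < n i0) f y * outer u (upd x i0 y) =
  ap f (u i0) * \prod_(i < k | i != i0) u i 0 (x i).
Proof.
rewrite /ap mulr_suml; apply: eq_bigr => y _.
rewrite /outer (bigD1 i0) //= upd_same mulrA.
by rewrite (eq_bigr (fun i => u i 0 (x i))) // => i hi; rewrite upd_other.
Qed.

Lemma contr_sum {k n r} (u : 'I_r -> forall i : 'I_k, 'rV[C]_(n i)) i0 (f : 'I_(n i0) -> C) x :
  \sum_(y < n i0) f y * (\sum_(j < r) outer (u j) (upd x i0 y)) =
  \sum_(j < r) ap f (u j i0) * \prod_(i < k | i != i0) u j i 0 (x i).
Proof.
under eq_bigr do rewrite mulr_sumr.
rewrite exchange_big /=; apply: eq_bigr => j _; exact: contr_outer.
Qed.

Definition Gt {k} {n : 'I_k -> nat} (v w : forall i : 'I_k, 'rV[C]_(n i))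
  (S : {set 'I_k}) (c : C) : tensor n :=
  fun x => c * outer v x + \sum_(i in S) outer (fun j => if j == i then w j else v j) x.

Lemma contr_G {k n} (v w : forall i : 'I_k, 'rV[C]_(n i)) S c i0 (f : 'I_(n i0) -> C) x :
  \sum_(y < n i0) f y * Gt v w S c (upd x i0 y) =
  c * ap f (v i0) * \prod_(i < k | i != i0) v i 0 (x i) +
  \sum_(i in S) ap f (if i0 == i then w i0 else v i0) *
     \prod_(j < k | j != i0) (if j == i then w j else v j) 0 (x j) :> C.
Proof.
rewrite /Gt; under eq_bigr do rewrite mulrDr.
rewrite big_split /=; f_equal.
  rewrite -mulrA -contr_outer mulr_sumr; apply: eq_bigr => y _; exact: mulrCA.
under eq_bigr do rewrite mulr_sumr.
rewrite exchange_big /=; apply: eq_bigr => i _; by rewrite contr_outer.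
Qed.

Lemma outer_split {k n} (u : forall i : 'I_k, 'rV[C]_(n i)) i0 x :
  outer u x = u i0 0 (x i0) * \prod_(i < k | i != i0) u i 0 (x i) :> C.
Proof. by rewrite /outer (bigD1 i0). Qed.

Lemma apB {m} (a b : 'rV[C]_m) (B : 'M[C]_(m, 1 + 1)) :
  col_mx a b *m B = 1%:M ->
  [/\ ap (fun y => B y 0) a = 1, ap (fun y => B y 0) b = 0,
      ap (fun y => B y 1) a = 0 & ap (fun y => B y 1) b = 1].
Proof.
move=> hB.
have E i j : \sum_(y < m) col_mx a b i y * B y j = (1%:M : 'M[C]_(1+1)) i j.
  by rewrite -hB mxE.
have Ea j : ap (fun y => B y j) a = (1%:M : 'M[C]_(1+1)) (lshift 1 0) j.
  rewrite -E /ap; apply: eq_bigr => y _; by rewrite col_mxEu mulrC.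
have Eb j : ap (fun y => B y j) b = (1%:M : 'M[C]_(1+1)) (rshift 1 0) j.
  rewrite -E /ap; apply: eq_bigr => y _; by rewrite col_mxEd mulrC.
by rewrite Ea Eb Ea Eb !mxE.
Qed.

Lemma ap_comb {m} (f : 'I_m -> C) (be al : C) (y0 : 'I_m) a :
  ap (fun y => be * f y + al * (y == y0)%:R) a = be * ap f a + al * a 0 y0.
Proof.
rewrite /ap; under eq_bigr do rewrite mulrDl.
rewrite big_split /= mulr_sumr; congr (_ + _).
  by apply: eq_bigr => y _; rewrite mulrA.
rewrite (bigD1 y0) //= eqxx mulr1 big1 ?addr0 // => y hy.
by rewrite (negbTE hy) mulr0 mul0r.
Qed.

Lemma func_sep {m} (a u : 'rV[C]_m) (psi0 : 'I_m -> C) y0 :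
  ap psi0 a = 1 -> u 0 y0 - ap psi0 u * a 0 y0 != 0 ->
  exists psi, ap psi a = 1 /\ ap psi u = 0.
Proof.
move=> h1 hd.
set t := ap psi0 u in hd *; set d := u 0 y0 - t * a 0 y0 in hd.
pose al := - t / d; pose be := 1 - al * a 0 y0.
exists (fun y => be * psi0 y + al * (y == y0)%:R); rewrite !ap_comb h1 -/t; split.
  by rewrite /be mulr1 subrK.
rewrite /be /al; apply/eqP; rewrite -subr_eq0 subr0.
have -> : (1 - - t / d * a 0 y0) * t + - t / d * u 0 y0 = t - t / d * d.
  rewrite /d; ring.
by rewrite divfK // subrr.
Qed.

Lemma nz_entry {m} (a : 'rV[C]_m) (f : 'I_m -> C) : ap f a = 1 -> exists t, a 0 t != 0.
Proof.
move=> h; case: (boolP [exists t, a 0 t != 0]) => [/existsP//|].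
rewrite negb_exists => /forallP hz; move: h; rewrite /ap big1 => [/eqP|y _].
  by rewrite eq_sym oner_eq0.
by move: (hz y); rewrite negbK => /eqP ->; rewrite mulr0.
Qed.

Lemma lb_key {k n} (v w : forall i : 'I_k, 'rV[C]_(n i)) (psi0 phi : forall i, 'I_(n i) -> C)
  (Hpv : forall i, ap (psi0 i) (v i) = 1) (Hfv : forall i, ap (phi i) (v i) = 0)
  (Hfw : forall i, ap (phi i) (w i) = 1) r (S : {set 'I_k}) (c : C) (u : 'I_r -> forall i, 'rV[C]_(n i)) (i0 : 'I_k) :
  i0 \in S -> (forall x, Gt v w S c x = \sum_(j < r) outer (u j) x) ->
  (forall j, u j i0 = ap (psi0 i0) (u j i0) *: v i0) -> False.
Proof.
move=> hi0 H Hu.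
have Hnz j : exists t, v j 0 t != 0 by apply: nz_entry (Hpv j).
pose x : multi_index n := fun j => xchoose (Hnz j).
have E : \sum_(y < n i0) phi i0 y * Gt v w S c (upd x i0 y) =
         \sum_(y < n i0) phi i0 y * (\sum_(j < r) outer (u j) (upd x i0 y)).
  by apply: eq_bigr => y _; rewrite H.
rewrite contr_G contr_sum Hfv mulr0 mul0r add0r in E.
rewrite [X in _ = X]big1 in E; last by move=> j _; rewrite [u j i0]Hu apZ Hfv mulr0 mul0r.
rewrite (bigD1 i0 hi0) /= eqxx Hfw mul1r in E.
rewrite [X in _ + X]big1 ?addr0 in E; last first.
  by move=> i /andP [_ hi]; rewrite eq_sym (negbTE hi) Hfv mul0r.
move: E; apply/eqP; rewrite prodf_seq_neq0; apply/allP => j _; apply/implyP => hj.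
by rewrite (negbTE hj) (xchooseP (Hnz j)).
Qed.

Lemma lb {k n} (v w : forall i : 'I_k, 'rV[C]_(n i)) :
  (forall i, row_free (col_mx (v i) (w i))) ->
  forall r (S : {set 'I_k}) (c : C) (u : 'I_r -> forall i, 'rV[C]_(n i)),
  (forall x, Gt v w S c x = \sum_(j < r) outer (u j) x) -> (#|S| <= r)%N.
Proof.
move=> Hvw.
have Hex i : exists B : 'M[C]_(n i, 1 + 1), col_mx (v i) (w i) *m B == 1%:M.
  by case/row_freeP: (Hvw i) => X hX; exists X; apply/eqP.
pose B i := xchoose (Hex i).
pose psi0 i := fun y => B i y 0; pose phi i := fun y => B i y 1.
have HB i := @apB _ _ _ _ (eqP (xchooseP (Hex i))).
have Hpv i : ap (psi0 i) (v i) = 1 by case: (HB i).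
have Hfv i : ap (phi i) (v i) = 0 by case: (HB i).
have Hfw i : ap (phi i) (w i) = 1 by case: (HB i).
elim=> [|r IH] S c u H.
  case: (set_0Vmem S) => [->|[i0 hi0]]; first by rewrite cards0.
  exfalso; apply: (@lb_key _ _ v w psi0 phi Hpv Hfv Hfw _ _ _ _ _ hi0 H); by case.
case: (set_0Vmem S) => [->|[i0 hi0]]; first by rewrite cards0.
pose nsp j := [exists y, u j i0 0 y - ap (psi0 i0) (u j i0) * v i0 0 y != 0].
case: (boolP [exists j, nsp j]) => [/existsP [j0 hj0] | hn]; last first.
  exfalso; apply: (@lb_key _ _ v w psi0 phi Hpv Hfv Hfw _ _ _ _ _ hi0 H) => j.
  move: hn; rewrite negb_exists => /forallP /(_ j); rewrite negb_exists => /forallP hj.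
  apply/rowP => y; rewrite !mxE; apply/eqP; rewrite -subr_eq0.
  by move: (hj y); rewrite negbK.
case/existsP: hj0 => y0 hy0.
have [psi [Hpsiv Hpsiu]] := @func_sep _ _ _ _ _ (Hpv i0) hy0.
pose u' (j : 'I_r) := fun i => if i == i0 then ap psi (u (lift j0 j) i0) *: v i
                               else u (lift j0 j) i.
have H' : forall x, Gt v w (S :\ i0) (c + ap psi (w i0)) x = \sum_(j < r) outer (u' j) x.
  move=> x.
  have E : v i0 0 (x i0) * \sum_(y < n i0) psi y * Gt v w S c (upd x i0 y) =
           v i0 0 (x i0) * \sum_(y < n i0) psi y * (\sum_(j < r.+1) outer (u j) (upd x i0 y)).
    by congr (_ * _); apply: eq_bigr => y _; rewrite H.
  rewrite contr_G contr_sum in E.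
  have R1 : \sum_(j < r) outer (u' j) x = v i0 0 (x i0) *
      \sum_(j < r.+1) ap psi (u j i0) * \prod_(i < k | i != i0) u j i 0 (x i).
    rewrite (bigD1_ord j0) //= Hpsiu mul0r add0r mulr_sumr; apply: eq_bigr => j _.
    rewrite (outer_split _ i0) /u' eqxx mxE -mulrA mulrCA; congr (_ * (_ * _)).
    by apply: eq_bigr => i hi; rewrite (negbTE hi).
  rewrite R1 -E Hpsiv mulr1 (big_setD1 _ hi0) /= eqxx.
  have Ei i : i \in S :\ i0 -> outer (fun j => if j == i then w j else v j) x =
     v i0 0 (x i0) * (ap psi (if i0 == i then w i0 else v i0) *
        \prod_(j < k | j != i0) (if j == i then w j else v j) 0 (x j)).
    rewrite in_setD1 => /andP [hi _]; rewrite (outer_split _ i0) eq_sym (negbTE hi).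
    by rewrite Hpsiv mul1r.
  have Ev : \prod_(j < k | j != i0) (if j == i0 then w j else v j) 0 (x j) =
            \prod_(j < k | j != i0) v j 0 (x j).
    by apply: eq_bigr => j hj; rewrite (negbTE hj).
  rewrite /Gt (eq_bigr _ Ei) -mulr_sumr Ev (outer_split v i0).
  ring.
by rewrite (cardsD1 i0) hi0 add1n ltnS (IH _ _ _ H').
Qed.


Definition Fp {I : Type} (r : seq I) (Vf Qf : I -> C) : {poly C} :=
  \prod_(i <- r) ((Qf i)%:P + Vf i *: 'X).

Lemma coefstep (Q V : C) (G : {poly C}) j :
  ((Q%:P + V *: 'X) * G)`_j = Q * G`_j + V * (if j == 0%N then 0 else G`_j.-1).
Proof.
rewrite mulrDl coefD coefCM -scalerAl coefZ coefXM; by case: j.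
Qed.

Lemma Fp0 {I} (r : seq I) Vf Qf : (Fp r Vf Qf)`_0 = \prod_(i <- r) Qf i.
Proof.
rewrite /Fp coef0_prod; apply: eq_bigr => i _.
by rewrite coefD coefC coefZ coefX /= mulr0 addr0.
Qed.

Lemma Fptop {I} (r : seq I) Vf Qf :
  (Fp r Vf Qf)`_(size r) = \prod_(i <- r) Vf i /\
  forall j, (size r < j)%N -> (Fp r Vf Qf)`_j = 0.
Proof.
elim: r => [|a r [IH1 IH2]].
  rewrite /Fp !big_nil; split; first by rewrite coefC.
  by case=> // j _; rewrite coefC.
rewrite /Fp big_cons -/(Fp r Vf Qf); split.
  rewrite coefstep /= IH2 // mulr0 add0r IH1 big_cons //.
case=> // j hj; rewrite coefstep /= IH2 ?IH2 ?mulr0 ?add0r //.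
by apply: leq_trans hj.
Qed.

Lemma Fpsub {I : eqType} (r : seq I) Vf Qf : uniq r -> (0 < size r)%N ->
  (Fp r Vf Qf)`_(size r).-1 =
  \sum_(i <- r) Qf i * \prod_(j <- r | j != i) Vf j.
Proof.
elim: r => [//|a r IH] /= /andP [ha hu] _.
rewrite /Fp big_cons -/(Fp r Vf Qf) coefstep (proj1 (Fptop r Vf Qf)).
rewrite big_cons big_cons eqxx /=.
have E1 : \prod_(j <- r | j != a) Vf j = \prod_(j <- r) Vf j.
  rewrite big_seq_cond [RHS]big_seq; apply: eq_bigl => j.
  case hj: (j \in r) => //=; apply/negP => /eqP ej; by rewrite -ej hj in ha.
rewrite E1; congr (_ + _).
case: r IH ha hu E1 => [|b r] IH ha hu E1; first by rewrite !big_nil mulr0.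
rewrite /= IH //= mulr_sumr; apply: eq_big_seq => i hi.
rewrite [in RHS]big_cons; have -> : (a != i) by apply/eqP => ei; rewrite ei hi in ha.
by rewrite mulrCA.
Qed.

Lemma key (s : C) c : (0 < c)%N -> - s != (`|s| + 1) * c%:R.
Proof.
case: c => // c _; apply/eqP => h.
have := congr1 (@Num.norm _ C) h.
have h0 : 0 <= `|s| + 1 by rewrite addr_ge0 ?ler01.
rewrite normrN normrM normr_nat (ger0_norm h0) mulr_natr mulrS.
set X := (`|s| + 1) *+ c.
have hX : 0 <= X by rewrite mulrn_wge0.
move=> e.
have e2 : 1 + X = 0 by apply: (addrI `|s|); rewrite addr0 addrA -e.
have : 0 < 1 + X by apply: lt_le_trans (ltr01) _; rewrite lerDl.
by rewrite e2 ltxx.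
Qed.

Lemma nodes (N : nat) (s : C) : exists be : 'I_N.+2 -> C,
  (forall l, be l != 0) /\ injective be /\ \sum_(l < N.+2) be l = - s.
Proof.
set M := `|s| + 1.
have hM : M != 0.
  apply: lt0r_neq0; apply: lt_le_trans (ltr01) _; by rewrite /M lerDr.
pose K := (\sum_(l < N.+1) l.+1)%N.
have hK : (0 < K)%N by rewrite /K big_ord_recl.
pose be (l : 'I_N.+2) : C := if (l < N.+1)%N then M * l.+1%:R else - s - M * K%:R.
have hlast : - s - M * K%:R != 0 by rewrite subr_eq0; exact: key.
exists be; split; [|split].
- move=> l; rewrite /be; case: ifP => // _.
  by rewrite mulf_neq0 // pnatr_eq0.
- move=> l l'; rewrite /be.
  case: ifP => hl; case: ifP => hl' e.
  + apply/val_inj/eqP; rewrite -eqSS -(eqr_nat C); apply/eqP.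
    exact: (mulfI hM).
  + exfalso; move/eqP: (@key s (l.+1 + K) (ltn_addl _ hK)); apply.
    have h : - s = M * l.+1%:R + M * K%:R by rewrite e subrK. by rewrite natrD mulrDr.
  + exfalso; move/eqP: (@key s (l'.+1 + K) (ltn_addl _ hK)); apply.
    have h : - s = M * l'.+1%:R + M * K%:R by rewrite -e subrK. by rewrite natrD mulrDr.
  + apply/val_inj; have := ltn_ord l; have := ltn_ord l'; move: hl hl'.
    move/negbT; rewrite -leqNgt => h1 /negbT; rewrite -leqNgt => h2 h3 h4; apply/eqP; rewrite eqn_leq; apply/andP; split; apply: (@leq_trans N.+1); by [].
- rewrite big_ord_recr /= /be /= ltnn.
  have -> : \sum_(i < N.+1) (if (widen_ord (leqnSn N.+1) i < N.+1)%N
      then M * i.+1%:R else - s - M * K%:R) = M * K%:R.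
    rewrite /K natr_sum mulr_sumr; apply: eq_bigr => i _ /=; by rewrite ltn_ord.
  by rewrite addrC subrK.
Qed.


Lemma vsolve (N : nat) (be : 'I_N.+1 -> C) : injective be ->
  exists e : 'I_N.+1 -> C,
  (forall j, (j <= N)%N -> \sum_(l < N.+1) e l * be l ^+ j = (j == N)%:R) /\
  \sum_(l < N.+1) e l * be l ^+ N.+1 = \sum_(l < N.+1) be l.
Proof.
move=> hinj.
pose a : 'rV[C]_N.+1 := \row_l be l.
pose V := Vandermonde N.+1 a.
have hV : V^T \in unitmx.
  rewrite unitmx_tr unitmxE det_Vandermonde unitfE.
  apply/prodf_neq0 => i _; apply/prodf_neq0 => j hij.
  rewrite !mxE subr_eq0; apply/negP => /eqP /hinj eji.
  by rewrite eji ltnn in hij.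
pose y : 'rV[C]_N.+1 := \row_(j < N.+1) (j == N :> nat)%:R.
pose E := y *m invmx V^T.
have hE : E *m V^T = y by rewrite /E mulmxKV.
have H1 : forall j, (j <= N)%N -> \sum_(l < N.+1) E 0 l * be l ^+ j = (j == N)%:R.
  move=> j hj; have := congr1 (fun M : 'rV_N.+1 => M 0 (inord j)) hE.
  rewrite !mxE inordK // => <-; apply: eq_bigr => l _; by rewrite !mxE inordK.
exists (fun l => E 0 l); split => //.
pose ps := [seq be l | l <- enum 'I_N.+1].
have hsz : size ps = N.+1 by rewrite size_map size_enum_ord.
pose D := \prod_(x <- ps) ('X - x%:P).
have hDs : size D = N.+2 by rewrite /D size_prod_XsubC hsz.
have hDN : D`_N = - \sum_(l < N.+1) be l.
  have h := @coefPn_prod_XsubC _ ps; rewrite hsz /= in h.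
  by rewrite /D h // big_map big_enum.
have hDl : D`_N.+1 = 1.
  have : D \is monic by apply: monic_prod_XsubC.
  by move/monicP; rewrite lead_coefE hDs.
have hroot l : be l ^+ N.+1 = - \sum_(i < N.+1) D`_i * be l ^+ i.
  have : root D (be l) by rewrite root_prod_XsubC; apply: map_f; rewrite mem_enum.
  rewrite /root horner_coef hDs big_ord_recr /= hDl mul1r => /eqP h.
  by apply/eqP; rewrite -addr_eq0 addrC h.
under eq_bigr do rewrite hroot mulrN mulr_sumr.
rewrite sumrN exchange_big /=.
have -> : \sum_(i < N.+1) \sum_(l < N.+1) E 0 l * (D`_i * be l ^+ i) =
          \sum_(i < N.+1) D`_i * (i == N :> nat)%:R.
  apply: eq_bigr => i _; rewrite -H1 ?mulr_sumr; last by rewrite -ltnS.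
  by apply: eq_bigr => l _; rewrite mulrCA.
rewrite big_ord_recr /= eqxx mulr1 big1 ?add0r ?hDN ?opprK // => i _.
by rewrite ltn_eqF ?mulr0.
Qed.


Lemma size_ie k : size (index_enum 'I_k) = k.
Proof. by rewrite [index_enum _]unlock -enumT size_enum_ord. Qed.

Lemma W_lb {k n} (v w : forall i : 'I_k, 'rV[C]_(n i)) :
  (forall i, row_free (col_mx (v i) (w i))) ->
  forall r, sum_of_rank_one (W_tensor v w) r -> (k <= r)%N.
Proof.
move=> Hvw r [u hu].
have := @lb _ _ v w Hvw r setT 0 u; rewrite cardsT card_ord; apply => x.
rewrite /Gt mul0r add0r; have := congr1 (fun T => T x) hu; rewrite /W_tensor /= => <-.
by apply: eq_bigl => i; rewrite in_setT.
Qed.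

Lemma add_term {k n} (T T' : tensor n) r (t : forall i : 'I_k, 'rV[C]_(n i)) :
  sum_of_rank_one T' r -> (forall x, T x = T' x + outer t x) ->
  sum_of_rank_one T r.+1.
Proof.
move=> [u hu] hT.
exists (fun j => if unlift ord_max j is Some j' then u j' else t).
apply: functional_extensionality => x.
rewrite hT hu (bigD1_ord ord_max) //= unlift_none addrC; congr (_ + _).
by apply: eq_bigr => j _; rewrite liftK.
Qed.

Lemma outer_scale {k n} (i0 : 'I_k) (c : C) (u : forall i : 'I_k, 'rV[C]_(n i)) x :
  outer (fun i => if i == i0 then c *: u i else u i) x = c * outer u x.
Proof.
rewrite (outer_split _ i0) (outer_split u i0) eqxx mxE -mulrA; congr (_ * _).
congr (_ * _); apply: eq_bigr => i hi; by rewrite (negbTE hi).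
Qed.

Theorem proposition4p6 (k : nat) (n : 'I_k -> nat)
    (v w p : forall i : 'I_k, 'rV[C]_(n i)) :
  (3 <= k)%N ->
  (forall i, row_free (col_mx (v i) (w i))) ->
  (forall i, (p i <= col_mx (v i) (w i))%MS) ->
  (forall i, p i != 0) ->
  (forall i, ~ exists c : C, p i = c *: v i) ->
  in_decomposition_locus (W_tensor v w) (outer p).
Proof.
case: k n v w p => [|[|[|m]]] // n v w p _ Hvw Hp _ Hpv.
pose D i := p i *m pinvmx (col_mx (v i) (w i)).
pose a i := D i 0 (lshift 1 0); pose b i := D i 0 (rshift 1 0).
have Hpab i : p i = a i *: v i + b i *: w i.
  rewrite -{1}(mulmxKpV (Hp i)) -/(D i) -[D i]hsubmxK mul_row_col.
  rewrite (mx11_scalar (lsubmx (D i))) (mx11_scalar (rsubmx (D i))) !mul_scalar_mx.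
  by rewrite /a /b /D !mxE.

have Hb i : b i != 0.
  apply/negP => /eqP hb; apply: (Hpv i); exists (a i).
  by rewrite Hpab hb scale0r addr0.
pose c i := a i / b i; pose s := \sum_i c i.
pose q i := (b i)^-1 *: p i.
have [be [hbe0 [hbinj hbsum]]] := nodes m s.
have [e [He1 He2]] := @vsolve m.+1 be hbinj.
pose d l := e l / be l.
pose lam := - (\sum_l d l) / \prod_i b i.
exists lam, m.+3; split.
  split; last exact: W_lb.
  exists (fun i j => if j == i then w j else v j); by [].
pose u' (l : 'I_m.+2) := fun i : 'I_m.+3 =>
  if i == ord0 then d l *: (be l *: v i + q i) else be l *: v i + q i.
have key : forall x, tensor_sub (W_tensor v w) (tensor_scale lam (outer p)) x
                     = \sum_(l < m.+2) outer (u' l) x.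
  move=> x.
  pose Vf i := v i 0 (x i); pose Qf i := q i 0 (x i).
  have hw i : w i 0 (x i) = Qf i - c i * Vf i.
    rewrite /Qf /q /Vf /c Hpab !mxE; field; exact: Hb.
  have hp i : p i 0 (x i) = b i * Qf i.
    by rewrite /Qf /q mxE mulrA divff ?mul1r.
  pose F := Fp (index_enum 'I_m.+3) Vf Qf.
  have F0 : F`_0 = \prod_i Qf i by exact: Fp0.
  have Ftop : F`_m.+3 = \prod_i Vf i.
    by have := (Fptop (index_enum 'I_m.+3) Vf Qf).1; rewrite size_ie.
  have Fsub : F`_m.+2 = \sum_i Qf i * \prod_(j | j != i) Vf j.
    by have := @Fpsub _ (index_enum _) Vf Qf (index_enum_uniq _); rewrite size_ie; apply.
  have Fsz : (size F <= m.+4)%N.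
    apply/leq_sizeP => j hj; apply: (Fptop (index_enum 'I_m.+3) Vf Qf).2.
    by rewrite size_ie.
  have hu l : outer (u' l) x = d l * F.[be l].
    rewrite /u' outer_scale; congr (_ * _).
    rewrite /F /Fp horner_prod; apply: eq_bigr => i _.
    by rewrite hornerD hornerC hornerZ hornerX !mxE addrC (mulrC (Vf i)) /Qf /q mxE.
  have sig j : \sum_l d l * be l ^+ j.+1 = \sum_l e l * be l ^+ j.
    apply: eq_bigr => l _; by rewrite exprS mulrA divfK.
  have R : \sum_(l < m.+2) outer (u' l) x =
           F`_0 * \sum_l d l + F`_m.+2 - s * F`_m.+3.
    under eq_bigr do rewrite hu (horner_coef_wide _ Fsz) mulr_sumr.
    rewrite exchange_big /=.
    under eq_bigr => j _ do under eq_bigr => l _ do rewrite mulrCA.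
    under eq_bigr => j _ do rewrite -mulr_sumr.
    rewrite big_ord_recl.
    under [X in _ + X]eq_bigr => j _ do rewrite lift0.
    rewrite [X in _ + X]big_ord_recr /= [X in _ + (X + _)]big_ord_recr /=.
    rewrite !sig He1 // eqxx He2 hbsum.
    rewrite [X in _ + (X + _ + _)]big1; last first.
      move=> i _; rewrite sig He1 ?(ltn_eqF (ltn_ord i)) ?mulr0 //; exact: ltnW.
    under [X in F`_0 * X]eq_bigr do rewrite expr0 mulr1.
    rewrite add0r (_ : (true%:R : C) = 1) //; ring.
  rewrite R /tensor_sub /tensor_scale /W_tensor.
  have hW : \sum_(i < m.+3) outer (fun j => if j == i then w j else v j) x =
            F`_m.+2 - s * \prod_i Vf i.
    rewrite Fsub /s mulr_suml -sumrB; apply: eq_bigr => i _.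
    rewrite (outer_split _ i) eqxx hw (eq_bigr (fun j => Vf j)); last first.
      by move=> j hj; rewrite (negbTE hj).
    by rewrite mulrBl [\prod_i Vf i](bigD1 i) //= mulrA.
  have hP : outer p x = \prod_i b i * \prod_i Qf i.
    by rewrite /outer (eq_bigr _ (fun i _ => hp i)) big_split.
  have hB : \prod_i b i != 0 by apply/prodf_neq0 => i _; exact: Hb.
  rewrite hW hP /lam F0 Ftop; field; exact: hB.
have -> : (m.+3 - 1 = m.+2)%N by [].
split.
  by exists u'; apply: functional_extensionality => x; exact: key.
move=> r hr.
have hT : sum_of_rank_one (W_tensor v w) r.+1.
  apply: (@add_term _ _ _ _ _ (fun i => if i == ord0 then lam *: p i else p i) hr) => x.
  by rewrite outer_scale /tensor_sub /tensor_scale subrK.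
exact: (@W_lb _ _ v w Hvw _ hT).
Qed.
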